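(* Let $V$ be a reflexive Banach space, $1<p<\infty$, and let $W$ be a Banach space compactly embedded in $V$. If $g\in L^p_b(\mathbb R,W)$, then $g$ is space regular as a function in $L^p_b(\mathbb R,V)$.
   Context: $L^p_b(\mathbb R,X)$ has norm $\sup_{s\in\mathbb R}\|g\|_{L^p((s,s+1),X)}$. A function $g\in L^p_b(\mathbb R,V)$ is space regular if for every $\varepsilon>0$ there exist a finite-dimensional subspace $V_\varepsilon\subset V$ and $g_\varepsilon\in L^p_b(\mathbb R,V_\varepsilon)$ with $\|g-g_\varepsilon\|_{L^p_b(\mathbb R,V)}\le\varepsilon$. *)

(* Defs.v *)
From HB Require Import structures.
From mathcomp Require Import all_boot all_order all_algebra.
From mathcomp Require Import all_classical all_reals all_analysis.
Set Implicit Arguments. Unset Strict Implicit. Unset Printing Implicit Defensive.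
Import Order.TTheory GRing.Theory Num.Theory.
Import numFieldNormedType.Exports.
Local Open Scope classical_set_scope.
Local Open Scope ring_scope.

Definition simple_fun {R : realType} {X : normedModType R} (f : R -> X) : Prop :=
  (exists vs : seq X, forall t, f t \in vs) /\
  (forall v : X, measurable (f @^-1` [set v])).

Definition strongly_measurable {R : realType} {X : normedModType R} (f : R -> X) : Prop :=
  exists s : nat -> R -> X, (forall n, simple_fun (s n)) /\
    {ae (@lebesgue_measure R), forall t, s n t @[n --> \oo] --> f t}.

Definition Lp_local_norm {R : realType} {X : normedModType R} (p : R) (f : R -> X) (s : R)
  : \bar R :=
  ((\int[@lebesgue_measure R]_(t in `]s, (s + 1)%R[) ((`|f t| `^ p)%:E)) `^ p^-1)%E.

Definition Lpb_norm {R : realType} {X : normedModType R} (p : R) (f : R -> X) : \bar R :=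
  ereal_sup (range (Lp_local_norm p f)).

Definition in_Lpb {R : realType} {X : normedModType R} (p : R) (f : R -> X) : Prop :=
  strongly_measurable f /\ (Lpb_norm p f < +oo)%E.

Definition in_span {R : realType} {X : normedModType R} (vs : seq X) (x : X) : Prop :=
  exists c : nat -> R, x = \sum_(k < size vs) c k *: vs`_k.

Definition space_regular {R : realType} {V : normedModType R} (p : R) (g : R -> V) : Prop :=
  forall eps : R, 0 < eps ->
    exists (vs : seq V) (ge : R -> V),
      (forall t, in_span vs (ge t)) /\ in_Lpb p ge /\
      (Lpb_norm p (fun t => (g t - ge t)%R) <= eps%:E)%E.

(* Reflexivity: every bounded linear functional on the dual V' (with the
   operator norm) is evaluation at some point of V. *)
Definition cont_lin_functional {R : realType} {V : normedModType R} (f : V -> R) : Prop :=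
  (forall (a : R) (x y : V), f (a *: x + y) = a * f x + f y) /\ continuous f.

Definition reflexive_space (R : realType) (V : normedModType R) : Prop :=
  forall Phi : (V -> R) -> R,
    (forall (a : R) (f h : V -> R), cont_lin_functional f -> cont_lin_functional h ->
        Phi (fun v => a * f v + h v) = a * Phi f + Phi h) ->
    (exists C : R, forall (f : V -> R) (M : R), cont_lin_functional f ->
        (forall v, `|f v| <= M * `|v|) -> `|Phi f| <= C * M) ->
    exists v : V, forall f, cont_lin_functional f -> Phi f = f v.

Definition compact_embedding {R : realType} {W V : normedModType R} (i : W -> V) : Prop :=
  (forall (a : R) (x y : W), i (a *: x + y) = a *: i x + i y) /\
  injective i /\ continuous i /\
  compact (closure (i @` [set w : W | `|w| <= 1])).

(* Main.v *)
Require Import Defs.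
From HB Require Import structures.
From mathcomp Require Import all_boot all_order all_algebra.
From mathcomp Require Import all_classical all_reals all_analysis.
Import Order.TTheory GRing.Theory Num.Theory.
Import numFieldNormedType.Exports.
Local Open Scope ring_scope.
From mathcomp Require Import ring.
Set Implicit Arguments. Unset Strict Implicit. Unset Printing Implicit Defensive.
Local Open Scope classical_set_scope.
Local Open Scope ring_scope.

Lemma sum_cont (R : realType) (T : topologicalType) (V : normedModType R)
  (f : nat -> T -> V) (x : T) (n : nat) :
  (forall k, (k < n)%N -> {for x, continuous (f k)}) ->
  {for x, continuous (fun y => \sum_(k < n) f k y)}.
Proof.
elim: n => [|n IH] fc.
  rewrite (_ : (fun _ => _) = cst 0); first exact: cvg_cst.
  by apply: funext => y; rewrite big_ord0.
rewrite (_ : (fun _ => _) = (fun y => \sum_(k < n) f k y) + f n).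
  apply: cvgD; last exact: fc.
  by apply: IH => k kn; apply: fc; rewrite ltnS ltnW.
by apply: funext => y; rewrite big_ord_recr.
Qed.
Lemma net_lemma (R : realType) (V : normedModType R) (K : set V) (e : R) :
  0 < e -> compact K -> exists vs : seq V, forall x, K x -> exists2 v, v \in vs & `|x - v| < e.
Proof.
move=> e0; rewrite compact_cover => cK.
have := cK V K (fun v => ball v e) _ _.
case.
- by move=> v _; exact: ball_open.
- by move=> x Kx; exists x => //; exact: ballxx.
move=> D' _ cov; exists (finmap.enum_fset D') => x /cov [v /= vD bv]; exists v => //.
by move: bv; rewrite -ball_normE /ball_ /= distrC.
Qed.
Section Sigma.
Variables (R : realType) (W V : normedModType R) (i : W -> V).
Hypothesis ilin : forall a x y, i (a *: x + y) = a *: i x + i y.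
Hypothesis icont : continuous i.
Variables (vs : seq V) (e : R).
Hypothesis e0 : 0 < e.
Hypothesis net : forall w, `|w| <= 1 -> exists2 v, v \in vs & `|i w - v| < e.

Lemma i0 : i 0 = 0.
Proof.
have h := ilin 1 0 0; rewrite !scale1r addr0 in h.
by apply: (@addrI _ (i 0)); rewrite addr0 -h.
Qed.

Lemma iZ a x : i (a *: x) = a *: i x.
Proof. by have := ilin a x 0; rewrite !addr0 i0 addr0. Qed.

Definition uu k w := Order.max (0:R) (2 * e * `|w| - `|i w - `|w| *: vs`_k|).
Definition DD w := \sum_(k < size vs) uu k w.
Definition cc k w := if DD w == 0 then 0 else uu k w * `|w| / DD w.
Definition sig w := \sum_(k < size vs) cc k w *: vs`_k.

Lemma uu_ge0 k w : 0 <= uu k w.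
Proof. by rewrite /uu le_max lexx. Qed.

Lemma DD_ge0 w : 0 <= DD w.
Proof. by apply: sumr_ge0 => k _; exact: uu_ge0. Qed.

Lemma uu_le_DD (k : 'I_(size vs)) w : uu k w <= DD w.
Proof.
rewrite /DD (bigD1 k) //= lerDl; apply: sumr_ge0 => j _; exact: uu_ge0.
Qed.

Lemma cc_ge0 k w : 0 <= cc k w.
Proof.
rewrite /cc; case: eqP => // _; apply: divr_ge0; last exact: DD_ge0.
by apply: mulr_ge0 => //; exact: uu_ge0.
Qed.

Lemma cc_le (k : 'I_(size vs)) w : cc k w <= `|w|.
Proof.
rewrite /cc; case: eqP => [_|/eqP D0]; first by [].
have Dp : 0 < DD w by rewrite lt_def D0 DD_ge0.
rewrite ler_pdivrMr // mulrC ler_wpM2l //; exact: uu_le_DD.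
Qed.

Lemma DD_pos w : w != 0 -> 0 < DD w.
Proof.
move=> w0; have nw : 0 < `|w| by rewrite normr_gt0.
have := net (w := `|w|^-1 *: w) _.
case; first by rewrite normrZ normrV ?unitfE ?normr_eq0 // normr_id mulVf // gt_eqF.
move=> v vin; rewrite iZ => hv.
have kl : (index v vs < size vs)%N by rewrite index_mem.
apply: (lt_le_trans _ (uu_le_DD (Ordinal kl) w)).
rewrite /uu /= nth_index // lt_max; apply/orP; right.
rewrite subr_gt0.
have -> : i w - `|w| *: v = `|w| *: (`|w|^-1 *: i w - v).
  by rewrite scalerBr scalerA divff ?gt_eqF // scale1r.
rewrite normrZ normr_id mulrC ltr_pM2r //.
rewrite (lt_le_trans hv) // -[X in X <= _]mul1r ler_wpM2r ?ltW //.
by rewrite ltr1n.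
Qed.
Lemma uu_term k w : uu k w * `|i w - `|w| *: vs`_k| <= uu k w * (2 * e * `|w|).
Proof.
rewrite /uu; set a := (2 * e * `|w| - _).
case/orP: (le_total a 0) => a0; first by rewrite max_l // !mul0r.
rewrite max_r // ler_wpM2l //.
by move: a0; rewrite /a subr_ge0.
Qed.


Lemma sig_err w : `|i w - sig w| <= 2 * e * `|w|.
Proof.
have [->|w0] := eqVneq w 0.
  rewrite i0 /sig normr0 mulr0 big1 ?subr0 ?normr0 // => k _.
  rewrite /cc; case: eqP => _; first by rewrite scale0r.
  by rewrite normr0 mulr0 mul0r scale0r.
have Dp := DD_pos w0.
have -> : i w - sig w = \sum_(k < size vs) ((uu k w / DD w) *: i w - cc k w *: vs`_k).
  by rewrite sumrB -scaler_suml -mulr_suml divff ?gt_eqF // scale1r.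
have -> : \sum_(k < size vs) ((uu k w / DD w) *: i w - cc k w *: vs`_k) =
   \sum_(k < size vs) (uu k w / DD w) *: (i w - `|w| *: vs`_k).
  by apply: eq_bigr => k _; rewrite /cc gt_eqF // scalerBr scalerA mulrAC.
apply: (le_trans (ler_norm_sum _ _ _)).
apply: (le_trans (y := \sum_(k < size vs) (uu k w / DD w) * (2 * e * `|w|))).
  apply: ler_sum => k _; rewrite normrZ ger0_norm ?divr_ge0 ?uu_ge0 ?DD_ge0 //.
  by rewrite mulrAC [X in _ <= X]mulrAC ler_wpM2r ?invr_ge0 ?DD_ge0 ?uu_term.
by rewrite -mulr_suml -mulr_suml divff ?gt_eqF // mul1r.
Qed.
Lemma uu_cont k : continuous (uu k).
Proof.
have -> : uu k = (cst 0) \max ((cst (2 * e) \* (fun w : W => `|w|)) -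
    ((fun v : V => `|v|) \o (i - (fun w : W => `|w| *: vs`_k)))).
  by apply: funext => w.
move=> x; apply: continuous_max; first exact: cvg_cst.
apply: continuousB; first by apply: continuousM; [exact: cvg_cst| exact: norm_continuous].
apply: continuous_comp; last exact: norm_continuous.
apply: continuousB; first exact: icont.
apply: continuousZ; [exact: norm_continuous | exact: cvg_cst].
Qed.
Lemma DD_cont : continuous DD.
Proof. by move=> x; apply: sum_cont => k _; exact: uu_cont. Qed.

Lemma cc0 (k : 'I_(size vs)) : cc k 0 = 0.
Proof. by apply/eqP; rewrite eq_le cc_ge0 andbT; have := cc_le k 0; rewrite normr0. Qed.

Lemma cc_cont (k : 'I_(size vs)) : continuous (cc k).
Proof.
move=> x; have [->|x0] := eqVneq x 0.
  rewrite /continuous_at cc0; apply/cvgrPdist_lt => eps eps0.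
  near=> y; rewrite sub0r normrN ger0_norm ?cc_ge0 //.
  apply: (le_lt_trans (cc_le k y)); near: y; exact: nbhs0_lt.
have Dx := DD_pos x0.
have e1 : {near x, (fun y => uu k y * `|y| / DD y) =1 cc k}.
  near=> y; rewrite /cc gt_eqF // DD_pos //.
  near: y; apply: (@open_nbhs_nbhs _ _ [set y | y != 0]); split => //.
  have -> : [set y : W | y != 0] = (fun y : W => `|y|) @^-1` [set r : R | r != 0].
    by apply/seteqP; split => y /=; rewrite normr_eq0.
  by apply: open_comp => [y _|]; [exact: norm_continuous | exact: open_neq].
rewrite /continuous_at {2}/cc gt_eqF //.
apply: cvg_trans (near_eq_cvg e1) _.
apply: cvgM; first by apply: cvgM; [exact: uu_cont | exact: norm_continuous].
apply: cvgV; [by rewrite gt_eqF | exact: DD_cont].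
Unshelve. all: by end_near.
Qed.
Lemma sig_cont : continuous sig.
Proof.
move=> x; apply: (@sum_cont R W V (fun k w => cc k w *: vs`_k)) => k kn.
apply: continuousZ; last exact: cvg_cst.
exact: (@cc_cont (Ordinal kn) x).
Qed.

Lemma sig_bound w : `|sig w| <= (\sum_(k < size vs) `|vs`_k|) * `|w|.
Proof.
apply: (le_trans (ler_norm_sum _ _ _)); rewrite mulr_suml; apply: ler_sum => k _.
by rewrite normrZ ger0_norm ?cc_ge0 // mulrC ler_wpM2l ?cc_le.
Qed.

End Sigma.
Section LowerInt.
Local Open Scope ereal_scope.
Import HBNNSimple.
Context d (T : measurableType d) (R : realType).
Variable mu : {measure set T -> \bar R}.

Lemma int_mono (D : set T) (f h : T -> \bar R) :
 (forall x, D x -> 0 <= f x) -> (forall x, D x -> f x <= h x) ->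
 \int[mu]_(x in D) f x <= \int[mu]_(x in D) h x.
Proof.
move=> f0 fh; have h0 : forall x, D x -> 0 <= h x.
  by move=> x Dx; exact: le_trans (f0 _ Dx) (fh _ Dx).
rewrite !ge0_integralE //; apply: ereal_sup_le => _ [k kf <-]; exists k => //= x.
apply: (le_trans (kf x)); rewrite /patch; case: ifP => // /set_mem Dx; exact: fh.
Qed.

Lemma int_scale (D : set T) (f : T -> \bar R) (c : R) : (0 < c)%R ->
  (forall x, D x -> 0 <= f x) ->
  \int[mu]_(x in D) (c%:E * f x) <= c%:E * \int[mu]_(x in D) f x.
Proof.
move=> c0 f0; have cf0 : forall x, D x -> 0 <= c%:E * f x.
  by move=> x Dx; apply: mule_ge0; [rewrite lee_fin ltW | exact: f0].
rewrite !ge0_integralE //; apply: ge_ereal_sup => _ [k kf <-].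
have ci : (0 <= c^-1)%R by rewrite invr_ge0 ltW.
pose k' := scale_nnsfun k ci.
have kk : sintegral mu k = c%:E * sintegral mu k'.
  rewrite (_ : sintegral mu k' = sintegral mu (cst c^-1 \* k)%R) //.
  by rewrite sintegralrM muleA -EFinM divff ?gt_eqF // mul1e.
rewrite kk; apply: lee_wpmul2l; first by rewrite lee_fin ltW.
apply: ereal_sup_ubound; exists k' => // x /=.
have := kf x; rewrite /patch; case: ifP => _ h.
  have -> : f x = c^-1%:E * (c%:E * f x).
    by rewrite muleA -EFinM mulVf ?gt_eqF // mul1e.
  by rewrite EFinM; apply: lee_wpmul2l; rewrite ?lee_fin.
have -> : (point : \bar R) = 0 by [].
by rewrite lee_fin pmulr_rle0 ?invr_gt0 // -lee_fin.
Qed.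
End LowerInt.
Section Cmp.
Local Open Scope ereal_scope.
Context (R : realType).

Lemma local_cmp (X1 X2 : normedModType R) (p c s : R) (f1 : R -> X1) (f2 : R -> X2) :
  (0 < p)%R -> (0 < c)%R -> (forall t, `|f1 t| <= c * `|f2 t|)%R ->
  Lp_local_norm p f1 s <= c%:E * Lp_local_norm p f2 s.
Proof.
move=> p0 c0 h; rewrite /Lp_local_norm.
set I1 := integral _ _ _; set I2 := integral _ _ _.
have I1ge0 : 0 <= I1 by apply: integral_ge0 => t _; rewrite lee_fin powR_ge0.
have I2ge0 : 0 <= I2 by apply: integral_ge0 => t _; rewrite lee_fin powR_ge0.
have h1 : I1 <= (c `^ p)%:E * I2.
  apply: (le_trans _ (int_scale _ (powR_gt0 p c0) _)); last first.
    by move=> t _; rewrite lee_fin powR_ge0.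
  apply: int_mono => t _; first by rewrite lee_fin powR_ge0.
  have c0' := ltW c0.
  rewrite -EFinM lee_fin -powRM //.
  by apply: (ge0_ler_powR (ltW p0)); rewrite ?nnegrE ?mulr_ge0.
apply: (le_trans (gt0_ler_poweR _ _ _ h1)).
- by rewrite invr_ge0 ltW.
- by rewrite in_itv /= I1ge0 leey.
- by rewrite in_itv /= leey andbT mule_ge0 // lee_fin powR_ge0.
rewrite poweRM ?lee_fin ?powR_ge0 // poweR_EFin -powRrM divff ?gt_eqF //.
by rewrite powRr1 // ltW.
Qed.

Lemma Lpb_cmp (X1 X2 : normedModType R) (p c : R) (f1 : R -> X1) (f2 : R -> X2) :
  (0 < p)%R -> (0 < c)%R -> (forall t, `|f1 t| <= c * `|f2 t|)%R ->
  Lpb_norm p f1 <= c%:E * Lpb_norm p f2.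
Proof.
move=> p0 c0 h; rewrite /Lpb_norm; apply: ge_ereal_sup => _ [s _ <-].
apply: le_trans (local_cmp s p0 c0 h) _; apply: lee_wpmul2l; first by rewrite lee_fin ltW.
by apply: ereal_sup_ubound; exists s.
Qed.
End Cmp.
Section Meas.
Context (R : realType).

Lemma simple_comp (X Y : normedModType R) (s : R -> X) (f : X -> Y) :
  simple_fun s -> simple_fun (f \o s).
Proof.
move=> [[vs hvs] ms]; split.
  by exists (map f vs) => t; rewrite /= map_f.
move=> v.
have -> : (f \o s) @^-1` [set v] = [set t | s t \in vs /\ f (s t) = v].
  by apply/seteqP; split => t /=; [move=> <-; split | case].
elim: vs {hvs} => [|x l IH].
  rewrite (_ : [set t | _] = set0); first exact: measurable0.
  by apply/seteqP; split => t //= [].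
have [fx|fx] := eqVneq (f x) v.
  rewrite (_ : [set t | _] = s @^-1` [set x] `|` [set t | s t \in l /\ f (s t) = v]).
    exact: measurableU.
  apply/seteqP; split => t /=.
    by rewrite in_cons => -[/orP[/eqP ->|tl] <-]; [left|right].
  by case=> [->|[tl <-]]; rewrite in_cons ?eqxx ?tl ?orbT.
rewrite (_ : [set t | _] = [set t | s t \in l /\ f (s t) = v]) //.
apply/seteqP; split => t /=.
  rewrite in_cons => -[/orP[/eqP sx|tl] ft]; last by [].
  by move: fx; rewrite -sx ft eqxx.
by case=> tl <-; rewrite in_cons tl orbT.
Qed.
End Meas.
Lemma sm_comp (R : realType) (X Y : normedModType R) (g : R -> X) (f : X -> Y) :
  continuous f -> strongly_measurable g -> strongly_measurable (f \o g).
Proof.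
move=> fc [s [ss hae]]; exists (fun n => f \o s n); split.
  by move=> n; exact: simple_comp.
have FF := ae_filter_ringOfSetsType (@lebesgue_measure R).
apply: (@filterS _ (almost_everywhere (@lebesgue_measure R)) FF _ _ _ hae) => t /= h.
exact: (continuous_cvg _ (fc (g t)) h).
Qed.
Unset Implicit Arguments.
Theorem proposition2p3 (R : realType)
  (V : completeNormedModType R) (W : completeNormedModType R)
  (p : R) (i : W -> V) (g : R -> W) :
  reflexive_space V -> 1 < p -> compact_embedding i ->
  in_Lpb p g ->
  space_regular p (i \o g).
Proof.
move=> _ p1 [ilin [_ [icont Kc]]] [gsm gN] eps eps0.
have p0 : 0 < p by apply: lt_trans p1.
have Lg0 : (0 <= Lpb_norm p g)%E.
  apply: (@le_trans _ _ (Lp_local_norm p g 0)); first exact: poweR_ge0.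
  by apply: ereal_sup_ubound; exists 0.
set N := fine (Lpb_norm p g).
have N0 : 0 <= N by rewrite fine_ge0.
have LgN : Lpb_norm p g = N%:E by rewrite fineK // ge0_fin_numE.
set e := eps / (2 * (N + 1)).
have e0 : 0 < e by rewrite divr_gt0 // mulr_gt0 // ltr_wpDl.
have [vs hvs] := net_lemma e0 Kc.
have net : forall w : W, `|w| <= 1 -> exists2 v : V, v \in vs & `|i w - v| < e.
  move=> w w1; apply: hvs; apply: subset_closure; exists w => //.
exists vs, (sig i vs e \o g); split; [|split].
- by move=> t; exists (fun k => cc i vs e k (g t)).
- split; first exact: sm_comp (sig_cont ilin icont e0 net) gsm.
  set M := \sum_(k < size vs) `|vs`_k|.
  have M0 : 0 <= M by apply: sumr_ge0.
  have M1 : 0 < M + 1 by rewrite ltr_wpDl.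
  have h : forall t, `|(sig i vs e \o g) t| <= (M + 1) * `|g t|.
    move=> t; apply: (le_trans (sig_bound i vs e (g t))).
    by rewrite ler_wpM2r // lerDl.
  apply: (le_lt_trans (Lpb_cmp p0 M1 h)).
  by rewrite LgN -EFinM ltry.
- have e2 : 0 < 2 * e by rewrite mulr_gt0.
  have h : forall t, `|(i \o g) t - (sig i vs e \o g) t| <= (2 * e) * `|g t|.
    by move=> t; exact: (sig_err ilin e0 net (g t)).
  apply: (le_trans (Lpb_cmp p0 e2 h)).
  rewrite LgN -EFinM lee_fin /e.
  have N1 : 0 < N + 1 by rewrite ltr_wpDl.
  have -> : 2 * (eps / (2 * (N + 1))) * N = eps * (N / (N + 1)).
    by field; rewrite gt_eqF.
  rewrite ler_piMr ?ltW ?divr_ge0 // ?ltW //.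
  by rewrite ltr_pdivrMr // mul1r ltrDl.
Qed.
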